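(* For $p>0$ let $\Upsilon^m_p$ be the set of $X\in\coprod_{N\ge1}(\mathbb{C}^{N\times N})^m$ for which the series $\sum_{w\in\mathcal{F}_m}p^{|w|}(X^w)^\ast X^w$ converges. Then $\mathcal{B}_{\mathbb{D}^m}=(\mathbb{D}^m)_{nc}\cap\Upsilon^m_1$ and $\mathcal{B}_{\mathbb{B}^m}=(\mathbb{B}^m)_{nc}\cap\Upsilon^m_m$. Moreover, if $X\in\Upsilon^m_p\cap(\mathbb{C}^{N\times N})^m$, then $\{X^w\}_{w\in\mathcal{F}_m}\in\ell^2_{1/p}(\mathcal{F}_m)\otimes\mathbb{C}^{N\times N}$, i.e. for every entry position $(i,j)$ the sequence $\{(X^w)_{i,j}\}_{w\in\mathcal{F}_m}$ lies in $\ell^2_{1/p}(\mathcal{F}_m)$.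
   Context: $\mathcal{F}_m$ is the free monoid on $\{1,\dots,m\}$, $|w|$ the length; $X^w=X_{w_1}\cdots X_{w_t}$, $X^\emptyset=I_N$. For $q>0$, $\ell^2_q(\mathcal{F}_m)$ is the space of complex sequences $\{f_w\}$ with $\sum_{w}q^{-|w|}|f_w|^2<\infty$; $\ell^2(\mathcal{F}_m)=\ell^2_1(\mathcal{F}_m)$. $(\mathbb{D}^m)_{nc}=\coprod_N\{X\in(\mathbb{C}^{N\times N})^m:\|X_j\|<1\ \forall j\}$, $(\mathbb{B}^m)_{nc}=\coprod_N\{X:\sum_iX_i^\ast X_i<I_N\}$. Noncommutative functions on $\Omega$ (one of these) map level $N$ to $\mathbb{C}^{N\times N}$ and respect direct sums and similarities; $\mathcal{A}_\Omega$ consists of those locally bounded on slices separately in every matrix dimension, and each $f\in\mathcal{A}_\Omega$ has Taylor--Taylor coefficients $f_w$ at $0$ with $f(X)=\sum_l\sum_{|w|=l}f_wX^w$ on $\Omega$. With $\operatorname{Tr}$ the non-normalized trace, $\mu_N$ the product Haar probability on $\mathcal{U}(N)^m$ (boundary of the polydisc at level $N$), and $\nu_N$ the unique $\mathcal{U}(mN)$-invariant probability on $\{X:\sum_iX_i^\ast X_i=I_N\}$ (boundary of the ball at level $N$; action by left multiplication on $[X_1;\dots;X_m]\in\mathbb{C}^{mN\times N}$), $H^2(\Omega)$ is the set of $f\in\mathcal{A}_\Omega$ with $\sup_N\sup_{0<r<1}\int\frac1N\operatorname{Tr}(f(rX)^\ast f(rX))\,d\omega_N<\infty$, normed by $\|f\|^2=\sum_w|f_w|^2$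 (polydisc) or $\sum_wm^{-|w|}|f_w|^2$ (ball). $\mathcal{B}_{\mathbb{D}^m}$ (resp. $\mathcal{B}_{\mathbb{B}^m}$) is the set of $X\in(\mathbb{D}^m)_{nc}$ (resp. $(\mathbb{B}^m)_{nc}$) for which the evaluation map $f\mapsto f(X)$ from $H^2$ of the corresponding set to the matrices is bounded. *)

(* Defs.v *)
From HB Require Import structures.
From mathcomp Require Import all_boot all_order all_algebra.
From mathcomp Require Import all_classical all_reals all_analysis.
From mathcomp.real_closed Require Import complex.
Set Implicit Arguments. Unset Strict Implicit. Unset Printing Implicit Defensive.
Import Order.TTheory GRing.Theory Num.Theory.
Import numFieldNormedType.Exports.
Local Open Scope classical_set_scope.
Local Open Scope ring_scope.

HB.instance Definition _ (R : realType) := isPointed.Build R[i] (0 : R[i]).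
HB.instance Definition _ (R : realType) (N : nat) :=
  isPointed.Build 'M[R[i]]_N (0 : 'M[R[i]]_N).

Section NCDefs.
Variables (R : realType) (m : nat).
Local Notation C := R[i].

Definition tup (N : nat) := 'I_m -> 'M[C]_N.

Definition cmod2 (z : C) : R := complex.Re z ^+ 2 + complex.Im z ^+ 2.

Definition adj (a b : nat) (A : 'M[C]_(a, b)) : 'M[C]_(b, a) := (map_mx conjc A)^T.

Definition sqn (N : nat) (v : 'cV[C]_N) : R :=
  \sum_(k < N) cmod2 (v k 0).

(** words of the free monoid F_m are sequences over 'I_m; X^w = X_{w_1}...X_{w_t} *)
Definition wpow (N : nat) (X : tup N) (w : seq 'I_m) : 'M[C]_N :=
  foldr (fun i A => X i *m A) 1%:M w.

Definition mx_cvg (a b : nat) (u : nat -> 'M[C]_(a, b)) (L : 'M[C]_(a, b)) : Prop :=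
  forall i j,
    ((fun n => complex.Re (u n i j) : R^o) @ \oo --> (complex.Re (L i j) : R^o)) /\
    ((fun n => complex.Im (u n i j) : R^o) @ \oo --> (complex.Im (L i j) : R^o)).

Definition mx_converges (a b : nat) (u : nat -> 'M[C]_(a, b)) : Prop :=
  exists L, mx_cvg u L.

Definition Upsilon (p : R) (N : nat) (X : tup N) : Prop :=
  mx_converges (fun n => \sum_(l < n) \sum_(w : l.-tuple 'I_m)
                          (p ^+ l)%:C%C *: (adj (wpow X w) *m wpow X w)).

(** (D^m)_nc at level N : every X_j has operator norm < 1 *)
Definition polydisc (N : nat) (X : tup N) : Prop :=
  forall j, exists c : R, 0 <= c < 1 /\
    forall v : 'cV[C]_N, sqn (X j *m v) <= c ^+ 2 * sqn v.

(** (B^m)_nc at level N : sum_i X_i^* X_i < I_N (strictly, in the Loewner order) *)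
Definition ncball (N : nat) (X : tup N) : Prop :=
  forall v : 'cV[C]_N, v != 0 -> \sum_(i < m) sqn (X i *m v) < sqn v.

Definition unitary (n : nat) (U : 'M[C]_n) : Prop := adj U *m U = 1%:M.

Definition torus (N : nat) (X : tup N) : Prop := forall i, unitary (X i).
Definition ncsphere (N : nat) (X : tup N) : Prop :=
  \sum_(i < m) adj (X i) *m X i = 1%:M.

(** stacking [X_1; ...; X_m] in C^{mN x N} and back *)
Definition stack (N : nat) (X : tup N) : 'M[C]_(m * N, N) :=
  \matrix_(k < m * N, j < N) (mxvec (\matrix_(i < m, a < N) X i a j)) 0 k.
Definition unstack (N : nat) (S : 'M[C]_(m * N, N)) : tup N :=
  fun i => \matrix_(a < N, j < N) (vec_mx (col j S)^T : 'M[C]_(m, N)) i a.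

(** Borel sigma-algebra on (C^{NxN})^m : generated by real/imaginary parts of entries *)
Definition entry_gen (N : nat) : set (set (tup N)) :=
  [set A | exists (i : 'I_m) (a b : 'I_N) (re : bool) (B : set R),
     measurable B /\
     A = (fun X : tup N => (if re then @complex.Re R else @complex.Im R) (X i a b)) @^-1` B].

Definition MT (N : nat) : measurableType _ := g_sigma_algebraType (@entry_gen N).

(** mu_N : product Haar probability on U(N)^m (characterized as the invariant
    probability supported on U(N)^m) *)
Definition is_Haar_torus (mu : forall N, probability (MT N) R) : Prop :=
  forall N, (0 < N)%N ->
    mu N (~` [set X | torus X]) = 0%E /\
    forall U : tup N, torus U -> forall A : set (MT N), measurable A ->
      mu N ((fun X : MT N => (fun i => U i *m X i) : MT N) @^-1` A) = mu N A.

(** nu_N : the U(mN)-invariant probability on {X : sum X_i^* X_i = I_N} *)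
Definition is_invariant_sphere (nu : forall N, probability (MT N) R) : Prop :=
  forall N, (0 < N)%N ->
    nu N (~` [set X | ncsphere X]) = 0%E /\
    forall U : 'M[C]_(m * N), unitary U -> forall A : set (MT N), measurable A ->
      nu N ((fun X : MT N => unstack (U *m stack X) : MT N) @^-1` A) = nu N A.

(** functions on the nc set Omega (values outside Omega are irrelevant) *)
Definition ncfun := forall N, tup N -> 'M[C]_N.

Definition is_nc (dom : forall N, tup N -> Prop) (f : ncfun) : Prop :=
  (forall N1 N2 (X : tup N1) (Y : tup N2), (0 < N1)%N -> (0 < N2)%N ->
     dom N1 X -> dom N2 Y ->
     f (N1 + N2)%N (fun i => block_mx (X i) 0 0 (Y i)) = block_mx (f N1 X) 0 0 (f N2 Y)) /\
  (forall N (X : tup N) (S : 'M[C]_N), (0 < N)%N -> S \in unitmx ->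
     dom N X -> dom N (fun i => S *m X i *m invmx S) ->
     f N (fun i => S *m X i *m invmx S) = S *m f N X *m invmx S).

Definition loc_bdd_slices (dom : forall N, tup N -> Prop) (f : ncfun) : Prop :=
  forall N (X Z : tup N), (0 < N)%N -> dom N X ->
    exists eps : R, 0 < eps /\ exists M : R, forall t : C, cmod2 t < eps ->
      dom N (fun i => X i + t *: Z i) ->
      forall a b, cmod2 (f N (fun i => X i + t *: Z i) a b) <= M.

Definition A_Omega (dom : forall N, tup N -> Prop) (f : ncfun) : Prop :=
  is_nc dom f /\ loc_bdd_slices dom f.

Definition is_TT_coeffs (dom : forall N, tup N -> Prop) (f : ncfun)
    (c : seq 'I_m -> C) : Prop :=
  forall N (X : tup N), (0 < N)%N -> dom N X ->
    mx_cvg (fun n => \sum_(l < n) \sum_(w : l.-tuple 'I_m) c w *: wpow X w) (f N X).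

Definition in_H2 (dom : forall N, tup N -> Prop) (om : forall N, probability (MT N) R)
    (f : ncfun) : Prop :=
  A_Omega dom f /\
  exists M : R, forall N, (0 < N)%N -> forall r : R, 0 < r < 1 ->
    (\int[om N]_(X in setT)
        ((N%:R)^-1 * complex.Re (\tr (adj (f N (fun i => r%:C%C *: X i))
                                       *m f N (fun i => r%:C%C *: X i))))%:E <= M%:E)%E.

Definition l2q_norm2 (q : R) (c : seq 'I_m -> C) : \bar R :=
  (\sum_(l <oo) (\sum_(w : l.-tuple 'I_m) ((q ^- l) * cmod2 (c w))%:E))%E.

(** B_Omega: points of Omega at which evaluation f |-> f(X) is bounded on H^2;
    the H^2 norm is ||f||^2 = l2q_norm2 q (coefficients of f) *)
Definition bounded_eval_pt (dom : forall N, tup N -> Prop)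
    (om : forall N, probability (MT N) R) (q : R) (N : nat) (X : tup N) : Prop :=
  dom N X /\
  exists K : R, forall (f : ncfun) (c : seq 'I_m -> C),
    in_H2 dom om f -> is_TT_coeffs dom f c ->
    forall a b, ((cmod2 (f N X a b))%:E <= K%:E * l2q_norm2 q c)%E.

End NCDefs.

(* Main.v *)
Require Import Defs.
From HB Require Import structures.
From mathcomp Require Import all_boot all_order all_algebra.
From mathcomp Require Import all_classical all_reals all_analysis.
From mathcomp.real_closed Require Import complex.
From mathcomp Require Import ring lra.
Import Order.TTheory GRing.Theory Num.Theory.
Import numFieldNormedType.Exports.
Local Open Scope classical_set_scope.
Local Open Scope ring_scope.
Set Implicit Arguments. Unset Strict Implicit.
Section Aux.
Variables (R : realType) (m : nat).
Local Notation C := R[i].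
Local Notation nc := (@Normc.normc R).

Lemma eqle (x y : R) : x = y -> x <= y.
Proof. by move->. Qed.

Lemma cmod2_ge0 (z : C) : 0 <= cmod2 z.
Proof. by rewrite /cmod2 addr_ge0 ?sqr_ge0. Qed.

Lemma nc_ge0 (z : C) : 0 <= nc z.
Proof. by case: z => a b; rewrite /Normc.normc sqrtr_ge0. Qed.

Lemma nc_sqr (z : C) : nc z ^+ 2 = cmod2 z.
Proof. by case: z => a b; rewrite /Normc.normc /cmod2 /= sqr_sqrtr // addr_ge0 ?sqr_ge0. Qed.

Lemma nc_sum (I : Type) (r : seq I) (F : I -> C) :
  nc (\sum_(i <- r) F i) <= \sum_(i <- r) nc (F i).
Proof.
elim/big_rec2: _ => [|i y1 y2 _ IH]; first by rewrite Normc.normc0.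
apply: le_trans (le_normcD _ _) _; exact: lerD.
Qed.

Lemma ReD (x y : C) : complex.Re (x + y) = complex.Re x + complex.Re y.
Proof. by case: x; case: y. Qed.
Lemma ImD (x y : C) : complex.Im (x + y) = complex.Im x + complex.Im y.
Proof. by case: x; case: y. Qed.
Lemma Re_sum (I : Type) (r : seq I) (F : I -> C) :
  complex.Re (\sum_(i <- r) F i) = \sum_(i <- r) complex.Re (F i).
Proof. by elim/big_rec2: _ => [//|i y1 y2 _ IH]; rewrite ReD IH. Qed.
Lemma Im_sum (I : Type) (r : seq I) (F : I -> C) :
  complex.Im (\sum_(i <- r) F i) = \sum_(i <- r) complex.Im (F i).
Proof. by elim/big_rec2: _ => [//|i y1 y2 _ IH]; rewrite ImD IH. Qed.
Lemma ReM_real (x : R) (z : C) : complex.Re (x%:C%C * z) = x * complex.Re z.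
Proof. by case: z => a b /=; rewrite mul0r subr0. Qed.
Lemma ImM_real (x : R) (z : C) : complex.Im (x%:C%C * z) = x * complex.Im z.
Proof. by case: z => a b /=; rewrite mul0r addr0. Qed.
Lemma conjM_self (z : C) : (conjc z * z) = (cmod2 z)%:C%C.
Proof.
case: z => a b; rewrite /cmod2 /=; apply/eqP; rewrite eq_complex /=; apply/andP; split; apply/eqP.
  by rewrite mulNr opprK !expr2.
by rewrite mulNr mulrC subrr.
Qed.
Lemma Re_conjM (x y : C) : `|complex.Re (conjc x * y)| <= cmod2 x + cmod2 y.
Proof.
case: x => a b; case: y => c d; rewrite /cmod2 /=.
have h1 := sqr_ge0 (a - c); have h2 := sqr_ge0 (a + c).
have h3 := sqr_ge0 (b - d); have h4 := sqr_ge0 (b + d).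
rewrite ler_norml; apply/andP; split; nra.
Qed.
Lemma Im_conjM (x y : C) : `|complex.Im (conjc x * y)| <= cmod2 x + cmod2 y.
Proof.
case: x => a b; case: y => c d; rewrite /cmod2 /=.
have h1 := sqr_ge0 (a - d); have h2 := sqr_ge0 (a + d).
have h3 := sqr_ge0 (b - c); have h4 := sqr_ge0 (b + c).
rewrite ler_norml; apply/andP; split; nra.
Qed.
Lemma cmod2_real (x : R) : cmod2 (x%:C%C) = x ^+ 2.
Proof. by rewrite /cmod2 /= expr0n /= addr0. Qed.
Lemma cmod2M (x y : C) : cmod2 (x * y) = cmod2 x * cmod2 y.
Proof. by rewrite -!nc_sqr Normc.normcM exprMn. Qed.
Lemma cmod2_conj (x : C) : cmod2 (conjc x) = cmod2 x.
Proof. by case: x => a b; rewrite /cmod2 /= sqrrN. Qed.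

Lemma CS_quad (A B Cc : R) : 0 <= A ->
  (forall t, 0 <= t ^+ 2 * A - 2 * t * Cc + B) -> Cc ^+ 2 <= A * B.
Proof.
move=> A0 h.
have [Ap|] := ltrP 0 A.
  have := h (Cc / A).
  have -> : (Cc / A) ^+ 2 * A - 2 * (Cc / A) * Cc + B = B - Cc ^+ 2 / A.
    by field; rewrite gt_eqF.
  rewrite subr_ge0 ler_pdivrMr // => H; by rewrite mulrC.
move=> A0'; have AE : A = 0 by apply/eqP; rewrite eq_le A0' A0.
rewrite AE mul0r.
have [->|Cn] := eqVneq Cc 0; first by rewrite expr0n.
have := h ((B + 1) / (2 * Cc)).
have -> : ((B + 1) / (2 * Cc)) ^+ 2 * A - 2 * ((B + 1) / (2 * Cc)) * Cc + B = -1.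
  by rewrite AE mulr0 sub0r; field.
by rewrite ler0N1.
Qed.


Definition SS (n : nat) (F : nat -> seq 'I_m -> R) : R :=
  \sum_(l < n) \sum_(w : l.-tuple 'I_m) F l w.

Lemma SS_le n F G : (forall l w, F l w <= G l w) -> SS n F <= SS n G.
Proof. by move=> h; apply: ler_sum => l _; apply: ler_sum => w _. Qed.
Lemma SS_ge0 n F : (forall l w, 0 <= F l w) -> 0 <= SS n F.
Proof. by move=> h; apply: sumr_ge0 => l _; apply: sumr_ge0 => w _. Qed.
Lemma SS_add n F G : SS n (fun l w => F l w + G l w) = SS n F + SS n G.
Proof. rewrite /SS -big_split /=; apply: eq_bigr => l _; by rewrite big_split. Qed.
Lemma SS_scale n k F : SS n (fun l w => k * F l w) = k * SS n F.
Proof. rewrite /SS mulr_sumr; apply: eq_bigr => l _; by rewrite mulr_sumr. Qed.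
Lemma SS_sum n (I : finType) (F : I -> nat -> seq 'I_m -> R) :
  \sum_i SS n (F i) = SS n (fun l w => \sum_i F i l w).
Proof.
rewrite /SS exchange_big /=; apply: eq_bigr => l _; by rewrite exchange_big.
Qed.
Lemma SS_S n F : SS n.+1 F = SS n F + \sum_(w : n.-tuple 'I_m) F n w.
Proof. by rewrite /SS big_ord_recr. Qed.
Lemma SS_ext n F G : (forall l w, (l < n)%N -> size w = l -> F l w = G l w) -> SS n F = SS n G.
Proof. move=> h; apply: eq_bigr => l _; apply: eq_bigr => w _; by rewrite h // size_tuple. Qed.
Lemma SS_nd F : (forall l w, 0 <= F l w) -> {homo (fun n => SS n F) : a b / (a <= b)%N >-> a <= b}.
Proof.
move=> h a b ab; elim: b ab => [|b IH]; first by rewrite leqn0 => /eqP ->.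
rewrite leq_eqVlt => /orP[/eqP -> //|]; rewrite ltnS => /IH hb.
rewrite SS_S; apply: le_trans hb _; rewrite lerDl; by apply: sumr_ge0.
Qed.

Lemma CS2 n (u a b : nat -> seq 'I_m -> R) : (forall l w, 0 < u l w) ->
  (SS n (fun l w => a l w * b l w)) ^+ 2 <=
  SS n (fun l w => u l w * a l w ^+ 2) * SS n (fun l w => b l w ^+ 2 / u l w).
Proof.
move=> up; apply: CS_quad; first by apply: SS_ge0 => l w; rewrite mulr_ge0 ?sqr_ge0 ?ltW.
move=> t.
suff : 0 <= SS n (fun l w => (t * u l w * a l w - b l w) ^+ 2 / u l w).
  rewrite (@SS_ext n _ (fun l w => t ^+ 2 * (u l w * a l w ^+ 2) + (- (2 * t)) * (a l w * b l w)
       + b l w ^+ 2 / u l w)); last by move=> l w _ _; field; rewrite gt_eqF.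
  rewrite !SS_add !SS_scale => H; apply: le_trans H _; apply: eqle; ring.
by apply: SS_ge0 => l w; rewrite divr_ge0 ?sqr_ge0 ?ltW.
Qed.

Lemma CSc n (u : nat -> seq 'I_m -> R) (c x : nat -> seq 'I_m -> C) : (forall l w, 0 < u l w) ->
  cmod2 (\sum_(l < n) \sum_(w : l.-tuple 'I_m) c l w * x l w) <=
  SS n (fun l w => u l w * cmod2 (c l w)) * SS n (fun l w => cmod2 (x l w) / u l w).
Proof.
move=> up; rewrite -nc_sqr.
have h1 : nc (\sum_(l < n) \sum_(w : l.-tuple 'I_m) c l w * x l w) <=
   SS n (fun l w => nc (c l w) * nc (x l w)).
  apply: le_trans; first exact: nc_sum. apply: ler_sum => l _.
  apply: le_trans; first exact: nc_sum. apply: ler_sum => w _.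
  by rewrite Normc.normcM.
apply: le_trans (_ : (SS n (fun l w => nc (c l w) * nc (x l w))) ^+ 2 <= _).
  by rewrite !expr2; apply: ler_pM => //; apply: nc_ge0.
apply: le_trans; first exact: CS2 up.
by apply: eqle; congr (_ * _); apply: SS_ext => l w _ _; rewrite nc_sqr.
Qed.

End Aux.
Set Implicit Arguments. Unset Strict Implicit.
Section Mx.
Variables (R : realType) (m : nat).
Local Notation C := R[i].

Definition contr N (Y : tup R m N) := forall j (v : 'cV[C]_N), sqn (Y j *m v) <= sqn v.

Lemma sqn_ge0 N (v : 'cV[C]_N) : 0 <= sqn v.
Proof. by apply: sumr_ge0 => k _; apply: cmod2_ge0. Qed.

Lemma wpow_nil N (Y : tup R m N) : wpow Y [::] = 1%:M.
Proof. by []. Qed.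
Lemma wpow_cons N (Y : tup R m N) i w : wpow Y (i :: w) = Y i *m wpow Y w.
Proof. by []. Qed.

Lemma contr_wpow N (Y : tup R m N) : contr Y -> forall w v, sqn (wpow Y w *m v) <= sqn v.
Proof.
move=> hY; elim=> [|i w IH] v; first by rewrite wpow_nil mul1mx.
by rewrite wpow_cons -mulmxA; apply: le_trans (hY i _) (IH v).
Qed.

Lemma sqn_col N (W : 'M[C]_N) b : sqn (W *m delta_mx b 0) = \sum_a cmod2 (W a b).
Proof. by rewrite -colE /sqn; apply: eq_bigr => a _; rewrite mxE. Qed.

Lemma sqn_delta N (b : 'I_N) : sqn (delta_mx b 0 : 'cV[C]_N) = 1.
Proof.
rewrite /sqn (bigD1 b) //= big1 ?addr0.
  by rewrite mxE !eqxx /= /cmod2 /= expr1n expr0n /= addr0.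
by move=> k kb; rewrite mxE (negbTE kb) /= /cmod2 /= expr0n /= addr0.
Qed.

Lemma contr_col N (Y : tup R m N) w b : contr Y -> \sum_a cmod2 (wpow Y w a b) <= 1.
Proof. by move=> hY; rewrite -sqn_col -(sqn_delta b); apply: contr_wpow. Qed.

Lemma contr_entry N (Y : tup R m N) w a b : contr Y -> cmod2 (wpow Y w a b) <= 1.
Proof.
move=> hY; apply: le_trans (contr_col w b hY).
rewrite (bigD1 a) //= lerDl; apply: sumr_ge0 => k _; exact: cmod2_ge0.
Qed.

Definition pol n (c : seq 'I_m -> C) N (Y : tup R m N) : 'M[C]_N :=
  \sum_(l < n) \sum_(w : l.-tuple 'I_m) c w *: wpow Y w.

Lemma pol_entry n c N (Y : tup R m N) a b :
  pol n c Y a b = \sum_(l < n) \sum_(w : l.-tuple 'I_m) c w * wpow Y w a b.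
Proof.
rewrite /pol summxE; apply: eq_bigr => l _; rewrite summxE; apply: eq_bigr => w _.
by rewrite mxE.
Qed.

Lemma pol_bound n c N (Y : tup R m N) a b :
  cmod2 (pol n c Y a b) <= SS n (fun l w => cmod2 (c w)) * SS n (fun l w => cmod2 (wpow Y w a b)).
Proof.
rewrite pol_entry.
have := @CSc R m n (fun _ _ => 1) (fun _ w => c w) (fun _ w => wpow Y w a b) (fun _ _ => ltr01).
move=> H; apply: le_trans H _; apply: eqle; congr (_ * _); apply: SS_ext => l w _ _.
  by rewrite mul1r.
by rewrite divr1.
Qed.

Lemma pol_bound1 n c N (Y : tup R m N) a b : contr Y ->
  cmod2 (pol n c Y a b) <= SS n (fun l w => cmod2 (c w)) * SS n (fun _ (_ : seq 'I_m) => (1 : R)).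
Proof.
move=> hY; apply: le_trans (pol_bound n c Y a b) _.
apply: ler_wpM2l; first by apply: SS_ge0 => *; apply: cmod2_ge0.
by apply: SS_le => l w; apply: contr_entry.
Qed.

Lemma Re_tr N (P : 'M[C]_N) :
  complex.Re (\tr (adj P *m P)) = \sum_b \sum_a cmod2 (P a b).
Proof.
rewrite /mxtrace Re_sum; apply: eq_bigr => b _.
rewrite mxE Re_sum; apply: eq_bigr => a _.
by rewrite /adj !mxE conjM_self.
Qed.

Lemma tr_bound n c N (Y : tup R m N) : contr Y ->
  complex.Re (\tr (adj (pol n c Y) *m pol n c Y)) <=
  N%:R * (SS n (fun l w => cmod2 (c w)) * SS n (fun _ (_ : seq 'I_m) => (1 : R))).
Proof.
move=> hY; rewrite Re_tr.
have -> : N%:R * (SS n (fun l w => cmod2 (c w)) * SS n (fun _ (_ : seq 'I_m) => (1 : R))) =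
   \sum_(b < N) (SS n (fun l w => cmod2 (c w)) * SS n (fun _ (_ : seq 'I_m) => (1 : R))).
  by rewrite sumr_const card_ord mulr_natl.
apply: ler_sum => b _.
apply: le_trans (_ : \sum_a SS n (fun l w => cmod2 (c w)) * SS n (fun l w => cmod2 (wpow Y w a b)) <= _).
  by apply: ler_sum => a _; apply: pol_bound.
rewrite -mulr_sumr; apply: ler_wpM2l; first by apply: SS_ge0 => *; apply: cmod2_ge0.
rewrite SS_sum; apply: SS_le => l w; exact: contr_col.
Qed.

End Mx.
Set Implicit Arguments. Unset Strict Implicit.
Section TF.
Variables (R : realType) (m : nat).
Local Notation C := R[i].

Lemma sum_block (I : Type) (r : seq I) N1 N2 (F : I -> 'M[C]_N1) (G : I -> 'M[C]_N2) :
  \sum_(i <- r) block_mx (F i) 0 0 (G i) = block_mx (\sum_(i <- r) F i) 0 0 (\sum_(i <- r) G i).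
Proof.
elim: r => [|x r IH]; first by rewrite !big_nil block_mx0.
by rewrite !big_cons IH add_block_mx !addr0.
Qed.

Lemma wpow_block N1 N2 (X : tup R m N1) (Y : tup R m N2) w :
  wpow (fun i => block_mx (X i) 0 0 (Y i) : 'M[C]_(N1 + N2)) w = block_mx (wpow X w) 0 0 (wpow Y w).
Proof.
elim: w => [|i w IH]; first by rewrite !wpow_nil scalar_mx_block.
rewrite !wpow_cons IH mulmx_block !mulmx0 !mul0mx !addr0 !add0r.
by [].
Qed.

Lemma pol_block n c N1 N2 (X : tup R m N1) (Y : tup R m N2) :
  pol n c (fun i => block_mx (X i) 0 0 (Y i) : 'M[C]_(N1 + N2)) = block_mx (pol n c X) 0 0 (pol n c Y).
Proof.
rewrite /pol -sum_block; apply: eq_bigr => l _; rewrite -sum_block; apply: eq_bigr => w _.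
by rewrite wpow_block scale_block_mx !scaler0.
Qed.

Lemma sqn_col_mx N1 N2 (u : 'cV[C]_N1) (v : 'cV[C]_N2) : sqn (col_mx u v) = sqn u + sqn v.
Proof.
rewrite /sqn big_split_ord /=; congr (_ + _); apply: eq_bigr => k _.
  by rewrite col_mxEu.
by rewrite col_mxEd.
Qed.

Lemma contr_block N1 N2 (X : tup R m N1) (Y : tup R m N2) :
  contr X -> contr Y -> contr (fun i => block_mx (X i) 0 0 (Y i) : 'M[C]_(N1 + N2)).
Proof.
move=> hX hY j v; rewrite -(vsubmxK v) mul_block_col !mul0mx addr0 add0r !sqn_col_mx.
by apply: lerD.
Qed.

Lemma wpow_sim N (X : tup R m N) (S : 'M[C]_N) w : S \in unitmx ->
  wpow (fun i => S *m X i *m invmx S) w = S *m wpow X w *m invmx S.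
Proof.
move=> uS; elim: w => [|i w IH]; first by rewrite !wpow_nil mulmx1 mulmxV.
rewrite !wpow_cons IH !mulmxA; congr (_ *m _).
by rewrite -[S *m X i *m invmx S *m S]mulmxA mulVmx // mulmx1.
Qed.

Lemma pol_sim n c N (X : tup R m N) (S : 'M[C]_N) : S \in unitmx ->
  pol n c (fun i => S *m X i *m invmx S) = S *m pol n c X *m invmx S.
Proof.
move=> uS; rewrite /pol mulmx_sumr mulmx_suml; apply: eq_bigr => l _.
rewrite mulmx_sumr mulmx_suml; apply: eq_bigr => w _.
by rewrite wpow_sim // scalemxAl scalemxAr.
Qed.

Lemma pol_stable n n' (c : seq 'I_m -> C) N (X : tup R m N) :
  (forall w, (n <= size w)%N -> c w = 0) -> (n <= n')%N -> pol n' c X = pol n c X.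
Proof.
move=> hc; elim: n' => [|n' IH]; first by rewrite leqn0 => /eqP ->.
rewrite leq_eqVlt => /orP[/eqP -> //|]; rewrite ltnS => hn.
rewrite /pol big_ord_recr /= -/(pol n' c X) IH // big1 ?addr0 // => w _.
by rewrite hc ?scale0r // size_tuple.
Qed.

Definition tf n (c : seq 'I_m -> C) : ncfun R m :=
  fun N Y => if `[< contr Y >] then pol n c Y else 0.

Lemma tf_contr n c N (Y : tup R m N) : contr Y -> tf n c Y = pol n c Y.
Proof. by move=> h; rewrite /tf asboolT. Qed.

Lemma tf_bound n c N (Y : tup R m N) a b :
  cmod2 (tf n c Y a b) <= SS n (fun l w => cmod2 (c w)) * SS n (fun _ (_ : seq 'I_m) => (1 : R)).
Proof.
rewrite /tf; case: asboolP => h; first exact: pol_bound1.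
rewrite mxE /cmod2 /= expr0n /= addr0 mulr_ge0 //; apply: SS_ge0 => *; rewrite ?ler01 ?cmod2_ge0 //.
Qed.

Lemma tf_tr n c N (Y : tup R m N) : (0 < N)%N ->
  0 <= (N%:R)^-1 * complex.Re (\tr (adj (tf n c Y) *m tf n c Y)) <=
  SS n (fun l w => cmod2 (c w)) * SS n (fun _ (_ : seq 'I_m) => (1 : R)).
Proof.
move=> N0; rewrite Re_tr; apply/andP; split.
  rewrite mulr_ge0 ?invr_ge0 ?ler0n //; apply: sumr_ge0 => b _; apply: sumr_ge0 => a _.
  exact: cmod2_ge0.
rewrite ler_pdivrMl ?ltr0n //.
have -> : N%:R * (SS n (fun l w => cmod2 (c w)) * SS n (fun _ (_ : seq 'I_m) => (1 : R))) =
   \sum_(b < N) (SS n (fun l w => cmod2 (c w)) * SS n (fun _ (_ : seq 'I_m) => (1 : R))).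
  by rewrite sumr_const card_ord mulr_natl.
rewrite /tf; case: asboolP => h.
  by rewrite -Re_tr (le_trans (tr_bound n c h)) // sumr_const card_ord mulr_natl.
apply: ler_sum => b _; rewrite big1; last by move=> a _; rewrite mxE /cmod2 /= expr0n /= addr0.
rewrite mulr_ge0 //; apply: SS_ge0 => *; rewrite ?ler01 ?cmod2_ge0 //.
Qed.

End TF.
Set Implicit Arguments. Unset Strict Implicit.

Module IB.
Import HBNNSimple.
Lemma int_bound d (T : measurableType d) (R : realType) (P : probability T R)
  (g : T -> R) (B : R) : (forall x, 0 <= g x <= B) ->
  (\int[P]_(x in setT) (g x)%:E <= B%:E)%E.
Proof.
move=> hg.
rewrite ge0_integralTE; last by move=> x; rewrite lee_fin; case/andP: (hg x).
apply: ge_ereal_sup => _ [h hle <-].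
have := integral_nnsfun P measurableT h; rewrite patch_setT => <-.
apply: (@le_trans _ _ (\int[P]_(x in setT) (cst B%:E) x)%E).
  apply: ge0_le_integral => //.
  - by move=> x _; rewrite lee_fin; exact: fun_ge0.
  - by apply/measurable_realfun.measurable_EFinP; exact: measurable_funPT.
  - move=> x _ /=; apply: le_trans (hle x) _; rewrite lee_fin; by case/andP: (hg x).
rewrite (integral_cst P measurableT).
set u := (X in (_ * X)%E).
have -> : u = 1%E by exact: probability_setT.
by rewrite mule1.
Qed.
End IB.

Section H2.
Variables (R : realType) (m : nat).
Local Notation C := R[i].

Lemma tf_H2 (dom : forall N, tup R m N -> Prop) (om : forall N, probability (MT R m N) R) n c :
  (forall N Y, dom N Y -> contr Y) -> in_H2 dom om (tf n c).
Proof.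
move=> hd; split; first split; first split.
- move=> N1 N2 X Y _ _ dX dY; rewrite !tf_contr ?pol_block //; try exact: hd.
  by apply: contr_block; exact: hd.
- move=> N X S _ uS dX dS; rewrite !tf_contr ?pol_sim //; exact: hd.
- move=> N X Z _ _; exists 1; split => //.
  exists (SS n (fun l w => cmod2 (c w)) * SS n (fun _ (_ : seq 'I_m) => (1 : R))) => t _ _ a b.
  exact: tf_bound.
exists (SS n (fun l w => cmod2 (c w)) * SS n (fun _ (_ : seq 'I_m) => (1 : R))) => N hN r _.
by apply: IB.int_bound => Y; apply: tf_tr.
Qed.

Lemma tf_TT (dom : forall N, tup R m N -> Prop) n (c : seq 'I_m -> C) :
  (forall N Y, dom N Y -> contr Y) -> (forall w, (n <= size w)%N -> c w = 0) ->
  is_TT_coeffs dom (tf n c) c.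
Proof.
move=> hd hc N X _ dX i j; rewrite tf_contr; last exact: hd.
split; apply: cvg_near_cst; near=> n'.
  have hn : (n <= n')%N by near: n'; exact: nbhs_infty_ge.
  by move: (pol_stable X hc hn); rewrite /pol => ->.
have hn : (n <= n')%N by near: n'; exact: nbhs_infty_ge.
by move: (pol_stable X hc hn); rewrite /pol => ->.
Unshelve. all: by end_near.
Qed.

End H2.
Set Implicit Arguments. Unset Strict Implicit.
Section Main.
Variables (R : realType) (m : nat).
Local Notation C := R[i].

Definition Vs (q : R) N (X : tup R m N) n : 'M[C]_N :=
  \sum_(l < n) \sum_(w : l.-tuple 'I_m) (q ^+ l)%:C%C *: (adj (wpow X w) *m wpow X w).

Lemma Vs_entry q N (X : tup R m N) n j k : Vs q X n j k =
  \sum_(l < n) \sum_(w : l.-tuple 'I_m) (q ^+ l)%:C%C *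
     \sum_a (conjc (wpow X w a j) * wpow X w a k).
Proof.
rewrite /Vs summxE; apply: eq_bigr => l _; rewrite summxE; apply: eq_bigr => w _.
rewrite mxE mxE; congr (_ * _); apply: eq_bigr => a _; by rewrite /adj !mxE.
Qed.

Lemma Re_Vs q N (X : tup R m N) n j k : complex.Re (Vs q X n j k) =
  SS n (fun l w => q ^+ l * \sum_a complex.Re (conjc (wpow X w a j) * wpow X w a k)).
Proof.
rewrite Vs_entry Re_sum; apply: eq_bigr => l _; rewrite Re_sum; apply: eq_bigr => w _.
by rewrite ReM_real Re_sum.
Qed.

Lemma Im_Vs q N (X : tup R m N) n j k : complex.Im (Vs q X n j k) =
  SS n (fun l w => q ^+ l * \sum_a complex.Im (conjc (wpow X w a j) * wpow X w a k)).
Proof.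
rewrite Vs_entry Im_sum; apply: eq_bigr => l _; rewrite Im_sum; apply: eq_bigr => w _.
by rewrite ImM_real Im_sum.
Qed.

Lemma Re_Vs_diag q N (X : tup R m N) n b : complex.Re (Vs q X n b b) =
  SS n (fun l w => q ^+ l * \sum_a cmod2 (wpow X w a b)).
Proof.
rewrite Re_Vs; apply: SS_ext => l w _ _; congr (_ * _); apply: eq_bigr => a _.
by rewrite conjM_self.
Qed.

Lemma Ups_to_S q N (X : tup R m N) : 0 < q -> Upsilon q X ->
  exists K, 0 < K /\ forall n a b, SS n (fun l w => q ^+ l * cmod2 (wpow X w a b)) <= K.
Proof.
move=> q0 [L hL].
exists (1 + \sum_b `|complex.Re (L b b)|); split.
  apply: (lt_le_trans ltr01); rewrite lerDl; exact: (sumr_ge0 _ (fun i _ => normr_ge0 _)).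
move=> n a b.
have hc := (hL b b).1.
have nd : nondecreasing_seq (fun n => complex.Re (Vs q X n b b)).
  move=> x y xy; rewrite !Re_Vs_diag; apply: SS_nd => // l w.
  apply: mulr_ge0; first by rewrite exprn_ge0 ?ltW.
  by apply: sumr_ge0 => *; apply: cmod2_ge0.
have cv : cvgn (fun n => complex.Re (Vs q X n b b)) by apply/cvg_ex; eexists; exact: hc.
have := nondecreasing_cvgn_le nd cv n.
rewrite (cvg_lim _ hc) // Re_Vs_diag => H.
apply: le_trans (_ : SS n (fun l w => q ^+ l * \sum_a cmod2 (wpow X w a b)) <= _).
  apply: SS_le => l w; apply: ler_wpM2l; first by rewrite exprn_ge0 ?ltW.
  by rewrite (bigD1 a) //= lerDl; apply: sumr_ge0 => *; apply: cmod2_ge0.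
apply: le_trans H _; apply: le_trans (ler_norm _) _.
apply: le_trans (_ : \sum_b `|complex.Re (L b b)| <= _); last by rewrite lerDr.
by rewrite (bigD1 b) //= lerDl; apply: sumr_ge0 => *; apply: normr_ge0.
Qed.


Lemma l2_partial q (c : seq 'I_m -> C) n :
  (\sum_(0 <= l < n) \sum_(w : l.-tuple 'I_m) ((q ^- l * cmod2 (c w))%:E))%E =
  (SS n (fun l w => q ^- l * cmod2 (c w)))%:E.
Proof.
rewrite big_mkord /SS -sumEFin; apply: eq_bigr => l _; by rewrite sumEFin.
Qed.

Lemma l2_ge_partial q (c : seq 'I_m -> C) n : 0 < q ->
  ((SS n (fun l w => q ^- l * cmod2 (c w)))%:E <= l2q_norm2 q c)%E.
Proof.
move=> q0; rewrite -l2_partial /l2q_norm2; apply: (nneseries_lim_ge (P := xpredT)) => k _ _.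
apply: sume_ge0 => w _; rewrite lee_fin mulr_ge0 ?cmod2_ge0 //.
by rewrite invr_ge0 exprn_ge0 ?ltW.
Qed.

Lemma l2_finite q (c : seq 'I_m -> C) n : 0 < q ->
  (forall w, (n <= size w)%N -> c w = 0) ->
  l2q_norm2 q c = (SS n (fun l w => q ^- l * cmod2 (c w)))%:E.
Proof.
move=> q0 hc; rewrite /l2q_norm2 (nneseries_split _ n); last first.
  move=> k _; apply: sume_ge0 => w _; rewrite lee_fin mulr_ge0 ?cmod2_ge0 //.
  by rewrite invr_ge0 exprn_ge0 ?ltW.
rewrite add0n eseries0 ?adde0 ?l2_partial // => i ni _.
rewrite big1 // => w _; rewrite hc ?size_tuple //.
by rewrite /cmod2 /= expr0n /= addr0 mulr0.
Qed.

Lemma part3 p N (X : tup R m N) : 0 < p -> Upsilon p X ->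
  forall i j, (l2q_norm2 p^-1 (fun w => wpow X w i j) < +oo)%E.
Proof.
move=> p0 hU i j; have [K [K0 hK]] := Ups_to_S p0 hU.
apply: (le_lt_trans _ (ltry K)); rewrite /l2q_norm2; apply: lime_le.
  apply: (is_cvg_nneseries (P := xpredT) (N := 0)) => k _ _.
  apply: sume_ge0 => w _; rewrite lee_fin mulr_ge0 ?cmod2_ge0 //.
  by rewrite invr_ge0 exprn_ge0 ?invr_ge0 ?ltW.
near=> n. have E := l2_partial (p^-1) (fun w => wpow X w i j) n. simpl in E. rewrite E lee_fin.
apply: le_trans (hK n i j); apply: eqle; apply: SS_ext => l w _ _.
by rewrite exprVn invrK.
Unshelve. all: by end_near.
Qed.

End Main.
Set Implicit Arguments. Unset Strict Implicit.
Section Main2.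
Variables (R : realType) (m : nat).
Local Notation C := R[i].

Lemma abs_SS_cvg (F G : nat -> seq 'I_m -> R) B :
  (forall l w, `|F l w| <= G l w) -> (forall n, SS n G <= B) -> cvgn (fun n => SS n F).
Proof.
move=> hFG hB.
pose g := fun l => \sum_(w : l.-tuple 'I_m) F l w.
have -> : (fun n => SS n F) = series g.
  by apply/funext => n; rewrite /series /= big_mkord.
apply: (@normed_cvg _ R^o).
apply: nondecreasing_is_cvgn.
  by apply: (nondecreasing_series (P := xpredT)) => k _ _; apply: normr_ge0.
exists B => _ [n _ <-]; apply: le_trans (hB n).
change (\sum_(0 <= k < n) `|g k| <= SS n G); rewrite big_mkord; apply: ler_sum => l _.
apply: le_trans (ler_norm_sum _ _ _) _; apply: ler_sum => w _; exact: hFG.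
Qed.

Lemma phi_cvg (phi : C -> R) q N (X : tup R m N) K : 0 < q ->
  (forall n j k, phi (Vs q X n j k) =
     SS n (fun l w => q ^+ l * \sum_a phi (conjc (wpow X w a j) * wpow X w a k))) ->
  (forall x y, `|phi (conjc x * y)| <= cmod2 x + cmod2 y) ->
  (forall n a b, SS n (fun l w => q ^+ l * cmod2 (wpow X w a b)) <= K) ->
  forall j k, cvgn (fun n => phi (Vs q X n j k)).
Proof.
move=> q0 hphi hb hK j k.
have -> : (fun n => phi (Vs q X n j k)) =
   (fun n => SS n (fun l w => q ^+ l * \sum_a phi (conjc (wpow X w a j) * wpow X w a k))).
  by apply/funext => n; rewrite hphi.
apply: (@abs_SS_cvg _ (fun l w => \sum_a (q ^+ l * cmod2 (wpow X w a j) + q ^+ l * cmod2 (wpow X w a k)))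
   (N%:R * (K + K))).
  have qg : forall l, 0 <= q ^+ l by move=> l; apply: exprn_ge0; apply: ltW.
  move=> l w; rewrite normrM (ger0_norm (qg l)).
  apply: le_trans; first (apply: ler_wpM2l; [exact: qg | exact: ler_norm_sum]).
  rewrite mulr_sumr; apply: ler_sum => a _; rewrite -mulrDr.
  by apply: ler_wpM2l; [exact: qg | exact: hb].
move=> n; rewrite -SS_sum.
rewrite mulr_natl -[N in _ *+ N]card_ord -sumr_const; apply: ler_sum => a _.
rewrite SS_add; apply: lerD; exact: hK.
Qed.

Lemma S_to_Ups q N (X : tup R m N) K : 0 < q ->
  (forall n a b, SS n (fun l w => q ^+ l * cmod2 (wpow X w a b)) <= K) -> Upsilon q X.
Proof.
move=> q0 hK.
have cRe := phi_cvg q0 (@Re_Vs R m q N X) (@Re_conjM R) hK.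
have cIm := phi_cvg q0 (@Im_Vs R m q N X) (@Im_conjM R) hK.
exists (\matrix_(j, k) ((limn (fun n => complex.Re (Vs q X n j k))) +i*
                        (limn (fun n => complex.Im (Vs q X n j k))))%C).
move=> j k; rewrite mxE /=; split; [exact: cRe | exact: cIm].
Qed.

End Main2.
Set Implicit Arguments. Unset Strict Implicit.
Section Main3.
Variables (R : realType) (m : nat).
Local Notation C := R[i].

Lemma bounded_to_S (dom : forall N, tup R m N -> Prop) (om : forall N, probability (MT R m N) R)
   q N (X : tup R m N) : 0 < q -> (forall N Y, dom N Y -> contr Y) ->
   bounded_eval_pt dom om q X ->
   exists K, forall n a b, SS n (fun l w => q ^+ l * cmod2 (wpow X w a b)) <= K.
Proof.
move=> q0 hd [dX [K hK]]; exists `|K| => n a b.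
pose c := fun w : seq 'I_m =>
  if (size w < n)%N then ((q ^+ size w)%:C * conjc (wpow X w a b))%C else 0.
have hc : forall w, (n <= size w)%N -> c w = 0.
  by move=> w; rewrite /c leqNgt => /negbTE ->.
have H := hK (tf n c) c (tf_H2 om n c hd) (tf_TT hd hc) a b.
set S := SS n (fun l w => q ^+ l * cmod2 (wpow X w a b)).
have fE : tf n c X a b = S%:C%C.
  rewrite tf_contr; last exact: hd _ _ dX.
  rewrite pol_entry /S /SS rmorph_sum; apply: eq_bigr => l _; rewrite rmorph_sum.
  apply: eq_bigr => w _; rewrite /c size_tuple ltn_ord -mulrA conjM_self.
  by rewrite rmorphM.
have lE : l2q_norm2 q c = S%:E.
  rewrite (l2_finite q0 hc); congr (_%:E); apply: SS_ext => l w ln sw.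
  rewrite /c sw ln cmod2M cmod2_real cmod2_conj.
  by field; rewrite expf_neq0 // gt_eqF.
rewrite fE lE cmod2_real -EFinM lee_fin in H.
have S0 : 0 <= S.
  apply: SS_ge0 => l w; apply: mulr_ge0; [exact: exprn_ge0 (ltW q0) | exact: cmod2_ge0].
have k1 := ler_norm K; have k2 := normr_ge0 K.
nra.
Qed.

Lemma S_to_bounded (dom : forall N, tup R m N -> Prop) (om : forall N, probability (MT R m N) R)
   q N (X : tup R m N) K : 0 < q -> (0 < N)%N -> dom N X -> 0 < K ->
   (forall n a b, SS n (fun l w => q ^+ l * cmod2 (wpow X w a b)) <= K) ->
   bounded_eval_pt dom om q X.
Proof.
move=> q0 N0 dX K0 hK; split => //; exists K => f c _ hTT a b.
have [hRe hIm] := hTT N X N0 dX a b.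
have qg : forall l, 0 < q ^- l by move=> l; rewrite invr_gt0 exprn_gt0.
have hb : forall n, cmod2 (pol n c X a b) <= SS n (fun l w => q ^- l * cmod2 (c w)) * K.
  move=> n; rewrite pol_entry.
  apply: le_trans; first exact: (@CSc R m n (fun l _ => q ^- l) (fun _ w => c w) (fun _ w => wpow X w a b)).
  apply: ler_wpM2l.
    by apply: SS_ge0 => l w; apply: mulr_ge0; [exact: ltW | exact: cmod2_ge0].
  apply: le_trans (hK n a b); apply: eqle; apply: SS_ext => l w _ _.
  by rewrite invrK mulrC.
have l2ge : (0 <= l2q_norm2 q c)%E.
  by apply: le_trans (l2_ge_partial c 0 q0); rewrite /SS big_ord0.
case E: (l2q_norm2 q c) => [r| |].
- rewrite -EFinM lee_fin.
  have cc := @cvgD _ _ _ _ _ _ _ _ _ (@cvgM _ _ _ _ _ _ _ _ hRe hRe) (@cvgM _ _ _ _ _ _ _ _ hIm hIm).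
  rewrite /cmod2 !expr2.
  have F0 : Filter (\oo : set_system nat) by exact: _.
  have cc' := cc F0 F0 F0.
  apply: (ler_cvg_to cc' (cvg_cst (K * r))).
  near=> n; rewrite /=.
  have := hb n; rewrite /cmod2 !expr2 => hbn; apply: le_trans hbn _.
  rewrite mulrC; apply: ler_wpM2l; first exact: ltW.
  by have := l2_ge_partial c n q0; rewrite E lee_fin.
- by rewrite gt0_muley ?lte_fin // leey.
- by rewrite E in l2ge.
Unshelve. all: by end_near.
Qed.

End Main3.
Set Implicit Arguments. Unset Strict Implicit.
Section Fin.
Variables (R : realType) (m : nat).

Lemma equiv_gen (dom : forall N, tup R m N -> Prop) (om : forall N, probability (MT R m N) R)
   q N (X : tup R m N) : 0 < q -> (0 < N)%N -> (forall N Y, dom N Y -> contr Y) ->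
   (bounded_eval_pt dom om q X <-> dom N X /\ Upsilon q X).
Proof.
move=> q0 N0 hd; split.
  move=> hb; have [K hK] := bounded_to_S q0 hd hb.
  by split; [exact: hb.1 | exact: S_to_Ups q0 hK].
move=> [dX hU]; have [K [K0 hK]] := Ups_to_S q0 hU.
exact: S_to_bounded q0 N0 dX K0 hK.
Qed.

Lemma polydisc_contr N (Y : tup R m N) : polydisc Y -> contr Y.
Proof.
move=> h j v; have [c [/andP[c0 c1] hc]] := h j.
apply: le_trans (hc v) _; rewrite -[X in _ <= X]mul1r; apply: ler_wpM2r; first exact: sqn_ge0.
by rewrite expr2 mulr_ile1 // ltW.
Qed.

Lemma ncball_contr N (Y : tup R m N) : ncball Y -> contr Y.
Proof.
move=> h j v; have [->|v0] := eqVneq v 0.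
  by rewrite mulmx0.
apply: le_trans (ltW (h v v0)); rewrite (bigD1 j) //= lerDl.
by apply: sumr_ge0 => i _; exact: sqn_ge0.
Qed.

End Fin.
Unset Implicit Arguments.

Theorem theorem3p9 (R : realType) (m : nat)
    (mu nu : forall N : nat, probability (MT R m N) R) :
  (0 < m)%N ->
  is_Haar_torus mu -> is_invariant_sphere nu ->
  forall (N : nat) (X : tup R m N), (0 < N)%N ->
    (bounded_eval_pt (@polydisc R m) mu 1 X <-> polydisc X /\ Upsilon 1 X) /\
    (bounded_eval_pt (@ncball R m) nu m%:R X <-> ncball X /\ Upsilon m%:R X) /\
    (forall p : R, 0 < p -> Upsilon p X ->
       forall i j : 'I_N, (l2q_norm2 p^-1 (fun w => wpow X w i j) < +oo)%E).
Proof.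
move=> m0 _ _ N X N0; split; last split.
- by apply: equiv_gen => //; exact: polydisc_contr.
- by apply: equiv_gen; [rewrite ltr0n | exact: N0 | exact: ncball_contr].
- by move=> p p0 hU; exact: part3.
Qed.
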